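(* Let $\chi,b,\nu,\mu>0$ with $b\ge\frac32\chi\mu$, and $c\in\mathbb{R}$. Let $r$ be globally Hölder continuous and bounded with finite limits $r(\pm\infty)$, $r(-\infty)<0<r(\infty)$ and $r(-\infty)\le r(x)\le r(\infty)$ for all $x$; put $r^*=\sup r=r(\infty)$. Fix $r_1$ with $r(-\infty)<r_1<0$, a point $x_1$ with $r(x)\le r_1$ for all $x\le x_1$, and let $\theta_1$ be the positive root of $\theta^2+c\theta+r_1=0$. Then for every $u\in\mathcal{E}_1^+$: $$\mathcal{A}_u\Big(\frac{r^*}{b-\chi\mu}\Big)(x)\le0\ \text{ for all }x\in\mathbb{R},\qquad \mathcal{A}_u\Big(\frac{r^*}{b-\chi\mu}e^{\theta_1(\cdot-x_1)}\Big)(x)\le 0\ \text{ for all }x\in(-\infty,x_1).$$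
   Context: $C^b_{\rm unif}(\mathbb{R})$: bounded uniformly continuous functions on $\mathbb{R}$. For $u\in C^b_{\rm unif}(\mathbb{R})$, $\Psi(x;u)=\frac{\mu}{2\sqrt\nu}\int_{\mathbb{R}}e^{-\sqrt\nu|x-y|}u(y)\,dy$ (the bounded solution of $\Psi''-\nu\Psi+\mu u=0$). $U_1^+(x)=\min\{\frac{r^*}{b-\chi\mu},\frac{r^*}{b-\chi\mu}e^{\theta_1(x-x_1)}\}$ and $\mathcal{E}_1^+=\{u\in C^b_{\rm unif}(\mathbb{R}):0\le u(x)\le U_1^+(x)\ \forall x\}$. For $u\in\mathcal{E}_1^+$ and $U\in C^2$, $$\mathcal{A}_u(U)(x)=U_{xx}+(c-\chi\Psi_x(x;u))U_x+(r(x)-\chi\nu\Psi(x;u)-(b-\chi\mu)U)U.$$ *)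

(* Defs.v *)
From Stdlib Require Import Reals Lra.
From Coquelicot Require Import Coquelicot.
Open Scope R_scope.

Definition unif_cont (u : R -> R) : Prop :=
  forall eps, 0 < eps -> exists delta, 0 < delta /\
    forall x y, Rabs (x - y) < delta -> Rabs (u x - u y) < eps.

Definition Cb_unif (u : R -> R) : Prop :=
  (exists M, forall x, Rabs (u x) <= M) /\ unif_cont u.

Definition Psi (nu mu : R) (u : R -> R) (x : R) : R :=
  mu / (2 * sqrt nu) *
  RInt_gen (fun y => exp (- sqrt nu * Rabs (x - y)) * u y)
           (Rbar_locally m_infty) (Rbar_locally p_infty).

Definition U1plus (rstar b chi mu theta1 x1 : R) (x : R) : R :=
  Rmin (rstar / (b - chi * mu)) (rstar / (b - chi * mu) * exp (theta1 * (x - x1))).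

Definition E1plus (rstar b chi mu theta1 x1 : R) (u : R -> R) : Prop :=
  Cb_unif u /\ forall x, 0 <= u x <= U1plus rstar b chi mu theta1 x1 x.

Definition A_op (chi b nu mu c : R) (r : R -> R) (u : R -> R) (U : R -> R) (x : R) : R :=
  Derive_n U 2 x
  + (c - chi * Derive (Psi nu mu u) x) * Derive U x
  + (r x - chi * nu * Psi nu mu u x - (b - chi * mu) * U x) * U x.

Definition holder (r : R -> R) : Prop :=
  exists alpha K, 0 < alpha <= 1 /\ 0 <= K /\
    forall x y, x <> y -> Rabs (r x - r y) <= K * Rpower (Rabs (x - y)) alpha.

(* Main.v *)
Require Import Defs.
From Stdlib Require Import Reals Lra Classical.
From Coquelicot Require Import Coquelicot.
Open Scope R_scope.


Lemma exR (h : R -> R) a b : (forall x, continuous h x) -> ex_RInt h a b.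
Proof. intros Hc. apply (@ex_RInt_continuous R_CompleteNormedModule). intros; auto. Qed.

Lemma Chas (h : R -> R) a b c : (forall x, continuous h x) ->
  RInt h a b + RInt h b c = RInt h a c.
Proof.
  intros Hc. apply (RInt_Chasles h a b c); apply exR; auto.
Qed.

Lemma RInt_nonneg (h : R -> R) a b : (forall x, continuous h x) -> (forall x, 0 <= h x) ->
  a <= b -> 0 <= RInt h a b.
Proof.
  intros Hc Hp Hab. apply RInt_ge_0; auto. apply exR; auto.
Qed.

Lemma RInt_swap' (h : R -> R) a b : (forall x, continuous h x) ->
  RInt h b a = - RInt h a b.
Proof.
  intros Hc. rewrite <- (opp_RInt_swap h a b). reflexivity.
  apply exR; auto.
Qed.

Lemma right_gen (h : R -> R) (B : R) :
  (forall x, continuous h x) -> (forall x, 0 <= h x) ->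
  (forall t, 0 <= t -> RInt h 0 t <= B) ->
  exists L, is_RInt_gen h (at_point 0) (Rbar_locally p_infty) L /\
    (forall t, 0 <= t -> RInt h 0 t <= L) /\
    (forall B', (forall t, 0 <= t -> RInt h 0 t <= B') -> L <= B').
Proof.
  intros Hc Hp HB.
  assert (Hmono : forall s t, s <= t -> RInt h 0 s <= RInt h 0 t).
  { intros s t Hst. rewrite <- (Chas h 0 s t Hc).
    pose proof (RInt_nonneg h s t Hc Hp Hst). lra. }
  set (E := fun v => exists t, 0 <= t /\ v = RInt h 0 t).
  destruct (completeness E) as [L [Hub Hlub]].
  { exists B. intros v [t [Ht ->]]. auto. }
  { exists (RInt h 0 0). exists 0. split; [lra|reflexivity]. }
  exists L. split; [|split].
  - intros P [eps HP].
    destruct (classic (exists t, 0 <= t /\ L - eps < RInt h 0 t)) as [[t0 [Ht0 Hlt]]|Hn].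
    + apply Filter_prod with (fun a => a = 0) (fun b => Rmax 0 t0 < b).
      * reflexivity.
      * exists (Rmax 0 t0); auto.
      * intros a b -> Hb. simpl. exists (RInt h 0 b). split.
        -- apply (@RInt_correct R_CompleteNormedModule), exR; auto.
        -- apply HP. assert (0 <= b) by (pose proof (Rmax_l 0 t0); lra).
           assert (t0 <= b) by (pose proof (Rmax_r 0 t0); lra).
           assert (RInt h 0 b <= L) by (apply Hub; exists b; split; auto).
           pose proof (Hmono t0 b H0).
           change (Rabs (RInt h 0 b - L) < eps). apply Rabs_def1; lra.
    + exfalso. assert (L <= L - eps).
      { apply Hlub. intros v [t [Ht ->]]. apply Rnot_lt_le. intro Hl. apply Hn. exists t. auto. }
      destruct eps; simpl in *; lra.
  - intros t Ht. apply Hub. exists t; auto.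
  - intros B' HB'. apply Hlub. intros v [t [Ht ->]]. auto.
Qed.

Lemma left_gen (h : R -> R) (B : R) :
  (forall x, continuous h x) -> (forall x, 0 <= h x) ->
  (forall t, t <= 0 -> RInt h t 0 <= B) ->
  exists L, is_RInt_gen h (Rbar_locally m_infty) (at_point 0) L /\
    (forall t, t <= 0 -> RInt h t 0 <= L) /\
    (forall B', (forall t, t <= 0 -> RInt h t 0 <= B') -> L <= B').
Proof.
  intros Hc Hp HB.
  assert (Hmono : forall s t, s <= t -> RInt h t 0 <= RInt h s 0).
  { intros s t Hst. rewrite <- (Chas h s t 0 Hc).
    pose proof (RInt_nonneg h s t Hc Hp Hst). lra. }
  set (E := fun v => exists t, t <= 0 /\ v = RInt h t 0).
  destruct (completeness E) as [L [Hub Hlub]].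
  { exists B. intros v [t [Ht ->]]. auto. }
  { exists (RInt h 0 0). exists 0. split; [lra|reflexivity]. }
  exists L. split; [|split].
  - intros P [eps HP].
    destruct (classic (exists t, t <= 0 /\ L - eps < RInt h t 0)) as [[t0 [Ht0 Hlt]]|Hn].
    + apply Filter_prod with (fun a => a < Rmin 0 t0) (fun b => b = 0).
      * exists (Rmin 0 t0); auto.
      * reflexivity.
      * intros a b Ha ->. simpl. exists (RInt h a 0). split.
        -- apply (@RInt_correct R_CompleteNormedModule), exR; auto.
        -- apply HP. assert (a <= 0) by (pose proof (Rmin_l 0 t0); lra).
           assert (a <= t0) by (pose proof (Rmin_r 0 t0); lra).
           assert (RInt h a 0 <= L) by (apply Hub; exists a; split; auto).
           pose proof (Hmono a t0 H0).
           change (Rabs (RInt h a 0 - L) < eps). apply Rabs_def1; lra.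
    + exfalso. assert (L <= L - eps).
      { apply Hlub. intros v [t [Ht ->]]. apply Rnot_lt_le. intro Hl. apply Hn. exists t. auto. }
      destruct eps; simpl in *; lra.
  - intros t Ht. apply Hub. exists t; auto.
  - intros B' HB'. apply Hlub. intros v [t [Ht ->]]. auto.
Qed.

Definition g1 (a : R) (u : R -> R) (y : R) := exp (a * y) * u y.
Definition g2 (a : R) (u : R -> R) (y : R) := exp (- a * y) * u y.

Lemma cont_exp_lin (k c x : R) : continuous (fun y => k * exp (c * y)) x.
Proof. apply (@ex_derive_continuous R_AbsRing R_NormedModule). auto_derive. auto. Qed.

Lemma cont_g1 a u x : (forall x, continuous u x) -> continuous (g1 a u) x.
Proof.
  intros Hu. unfold g1. apply (continuous_mult (fun y => exp (a*y)) u).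
  - apply (@ex_derive_continuous R_AbsRing R_NormedModule). auto_derive. auto.
  - auto.
Qed.

Lemma cont_g2 a u x : (forall x, continuous u x) -> continuous (g2 a u) x.
Proof.
  intros Hu. unfold g2. apply (continuous_mult (fun y => exp (-a*y)) u).
  - apply (@ex_derive_continuous R_AbsRing R_NormedModule). auto_derive. auto.
  - auto.
Qed.

Lemma RInt_exp_lin (k c s t : R) : c <> 0 ->
  RInt (fun y => k * exp (c * y)) s t = k / c * (exp (c * t) - exp (c * s)).
Proof.
  intros Hc. apply is_RInt_unique.
  replace (k / c * (exp (c * t) - exp (c * s))) with
    (minus ((fun y => k / c * exp (c * y)) t) ((fun y => k / c * exp (c * y)) s)).
  2:{ unfold minus, plus, opp; simpl. ring. }
  apply (@is_RInt_derive R_CompleteNormedModule (fun y => k / c * exp (c * y))).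
  - intros x _. auto_derive. auto. field. auto.
  - intros x _. apply cont_exp_lin.
Qed.

Lemma cont_of_unif (u : R -> R) :
  (forall eps, 0 < eps -> exists delta, 0 < delta /\
    forall x y, Rabs (x - y) < delta -> Rabs (u x - u y) < eps) ->
  forall x, continuous u x.
Proof.
  intros Hu x. apply continuity_pt_filterlim.
  intros eps Heps. destruct (Hu eps Heps) as [d [Hd H]].
  exists d. split; auto. intros y [_ Hy]. unfold R_dist in *. simpl in *. unfold R_dist in *. auto.
Qed.

Lemma psi_repr nu mu u K :
 0 < nu -> 0 < K -> (forall x, continuous u x) -> (forall x, 0 <= u x <= K) ->
 exists I1 I2,
  (forall t, t <= 0 -> RInt (g1 (sqrt nu) u) t 0 <= I1) /\
  (forall B', (forall t, t <= 0 -> RInt (g1 (sqrt nu) u) t 0 <= B') -> I1 <= B') /\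
  (forall t, 0 <= t -> RInt (g2 (sqrt nu) u) 0 t <= I2) /\
  (forall z, Psi nu mu u z = mu / (2 * sqrt nu) *
     (exp (- sqrt nu * z) * (I1 + RInt (g1 (sqrt nu) u) 0 z)
      + exp (sqrt nu * z) * (I2 - RInt (g2 (sqrt nu) u) 0 z))).
Proof.
  intros Hnu HK Hu Hub.
  assert (Ha : 0 < sqrt nu) by (apply sqrt_lt_R0; auto).
  set (a := sqrt nu) in *.
  assert (Hc1 : forall x, continuous (g1 a u) x) by (intros; apply cont_g1; auto).
  assert (Hc2 : forall x, continuous (g2 a u) x) by (intros; apply cont_g2; auto).
  assert (Hp1 : forall x, 0 <= g1 a u x).
  { intros x. unfold g1. pose proof (exp_pos (a*x)). pose proof (Hub x). nra. }
  assert (Hp2 : forall x, 0 <= g2 a u x).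
  { intros x. unfold g2. pose proof (exp_pos (-a*x)). pose proof (Hub x). nra. }
  destruct (left_gen (g1 a u) (K / a) Hc1 Hp1) as [I1 [HI1 [HI1a HI1b]]].
  { intros t Ht. apply Rle_trans with (RInt (fun y => K * exp (a * y)) t 0).
    - apply RInt_le; auto. apply exR; auto. apply exR; intros; apply cont_exp_lin.
      intros x _. unfold g1. pose proof (exp_pos (a*x)). pose proof (Hub x). nra.
    - rewrite RInt_exp_lin by lra. rewrite Rmult_0_r, exp_0.
      pose proof (exp_pos (a*t)). assert (0 < K / a) by (apply Rdiv_lt_0_compat; auto).
      nra. }
  destruct (right_gen (g2 a u) (K / a) Hc2 Hp2) as [I2 [HI2 [HI2a HI2b]]].
  { intros t Ht. apply Rle_trans with (RInt (fun y => K * exp (- a * y)) 0 t).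
    - apply RInt_le; auto. apply exR; auto. apply exR; intros; apply cont_exp_lin.
      intros x _. unfold g2. pose proof (exp_pos (-a*x)). pose proof (Hub x). nra.
    - rewrite RInt_exp_lin by lra. rewrite Rmult_0_r, exp_0.
      pose proof (exp_pos (-a*t)). assert (0 < K / a) by (apply Rdiv_lt_0_compat; auto).
      replace (K / - a) with (- (K / a)) by (field; lra).
      nra. }
  exists I1, I2. split; [exact HI1a|split; [exact HI1b|split; [exact HI2a|]]].
  intros z.
  assert (HL : is_RInt_gen (g1 a u) (Rbar_locally m_infty) (at_point z) (plus I1 (RInt (g1 a u) 0 z))).
  { apply (is_RInt_gen_Chasles _ 0); auto.
    apply is_RInt_gen_at_point. apply (@RInt_correct R_CompleteNormedModule). apply exR; auto. }
  apply (is_RInt_gen_scal _ (exp (- a * z))) in HL.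
  assert (HL2 : is_RInt_gen (fun y => exp (- a * Rabs (z - y)) * u y) (Rbar_locally m_infty) (at_point z)
     (exp (- a * z) * (I1 + RInt (g1 a u) 0 z))).
  { eapply is_RInt_gen_ext; [|exact HL].
    apply Filter_prod with (fun s => s < z) (fun s => s = z).
    - exists z; auto.
    - reflexivity.
    - intros s t Hs ->. simpl. intros x Hx.
      rewrite Rmin_left in Hx by lra. rewrite Rmax_right in Hx by lra.
      rewrite Rabs_right by lra. unfold scal; simpl; unfold mult; simpl. unfold g1.
      rewrite <- Rmult_assoc, <- exp_plus. f_equal. f_equal. ring. }
  assert (HR0 : is_RInt_gen (g2 a u) (at_point z) (at_point 0) (RInt (g2 a u) z 0)).
  { apply is_RInt_gen_at_point. apply (@RInt_correct R_CompleteNormedModule). apply exR; auto. }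
  pose proof (@is_RInt_gen_Chasles R_NormedModule _ _ _ _ (g2 a u) 0 _ _ HR0 HI2) as HR.
  apply (is_RInt_gen_scal _ (exp (a * z))) in HR.
  assert (HR2 : is_RInt_gen (fun y => exp (- a * Rabs (z - y)) * u y) (at_point z) (Rbar_locally p_infty)
     (exp (a * z) * (I2 - RInt (g2 a u) 0 z))).
  { replace (exp (a * z) * (I2 - RInt (g2 a u) 0 z)) with (scal (exp (a * z)) (plus (RInt (g2 a u) z 0) I2)).
    2:{ unfold scal, plus; simpl; unfold mult; simpl. rewrite (RInt_swap' _ 0 z Hc2). ring. }
    eapply is_RInt_gen_ext; [|exact HR].
    apply Filter_prod with (fun s => s = z) (fun s => z < s).
    - reflexivity.
    - exists z; auto.
    - intros s t -> Ht. simpl. intros x Hx.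
      rewrite Rmin_left in Hx by lra. rewrite Rmax_right in Hx by lra.
      rewrite Rabs_left by lra. unfold scal; simpl; unfold mult; simpl. unfold g2.
      rewrite <- Rmult_assoc, <- exp_plus. f_equal. f_equal. ring. }
  pose proof (is_RInt_gen_Chasles _ z _ _ HL2 HR2) as Htot.
  unfold Psi. fold a. rewrite (is_RInt_gen_unique _ _ Htot). reflexivity.
Qed.

Lemma isd_mult (f g : R -> R) x df dg : is_derive f x df -> is_derive g x dg ->
  is_derive (fun t => f t * g t) x (df * g x + f x * dg).
Proof. intros H1 H2. apply (is_derive_mult f g x df dg H1 H2). intros; apply Rmult_comm. Qed.

Lemma isd_plus (f g : R -> R) x df dg : is_derive f x df -> is_derive g x dg ->
  is_derive (fun t => f t + g t) x (df + dg).
Proof. intros H1 H2. apply (is_derive_plus f g x df dg H1 H2). Qed.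

Lemma isd_RInt (h : R -> R) x : (forall y, continuous h y) ->
  is_derive (fun t => RInt h 0 t) x (h x).
Proof.
  intros Hc. apply (@is_derive_RInt R_NormedModule h (fun t => RInt h 0 t) 0 x); auto.
  apply filter_forall. intros b. apply (@RInt_correct R_CompleteNormedModule). apply exR; auto.
Qed.

Lemma phi_deriv (a c0 I1 I2 : R) (u : R -> R) z : (forall y, continuous u y) ->
  is_derive (fun z => c0 * (exp (- a * z) * (I1 + RInt (g1 a u) 0 z)
      + exp (a * z) * (I2 - RInt (g2 a u) 0 z))) z
   (c0 * a * (exp (a * z) * (I2 - RInt (g2 a u) 0 z) - exp (- a * z) * (I1 + RInt (g1 a u) 0 z))).
Proof.
  intros Hu.
  assert (Hc1 : forall x, continuous (g1 a u) x) by (intros; apply cont_g1; auto).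
  assert (Hc2 : forall x, continuous (g2 a u) x) by (intros; apply cont_g2; auto).
  assert (E1 : is_derive (fun t => exp (- a * t)) z (- a * exp (- a * z))) by (auto_derive; auto; ring).
  assert (E2 : is_derive (fun t => exp (a * t)) z (a * exp (a * z))) by (auto_derive; auto; ring).
  assert (F1 : is_derive (fun t => I1 + RInt (g1 a u) 0 t) z (0 + g1 a u z)).
  { apply isd_plus. apply (is_derive_const I1 z). apply isd_RInt; auto. }
  assert (F2 : is_derive (fun t => I2 + (-1) * RInt (g2 a u) 0 t) z (0 + (-1) * g2 a u z)).
  { apply isd_plus. apply (is_derive_const I2 z). apply is_derive_scal. apply isd_RInt; auto. }
  pose proof (is_derive_scal _ _ c0 _ (isd_plus _ _ _ _ _ (isd_mult _ _ _ _ _ E1 F1) (isd_mult _ _ _ _ _ E2 F2))) as H.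
  eapply is_derive_ext in H.
  2:{ intros t. simpl. replace (I2 + -1 * RInt (g2 a u) 0 t) with (I2 - RInt (g2 a u) 0 t) by ring. reflexivity. }
  replace (c0 * a * (exp (a * z) * (I2 - RInt (g2 a u) 0 z) - exp (- a * z) * (I1 + RInt (g1 a u) 0 z)))
    with (c0 * (- a * exp (- a * z) * (I1 + RInt (g1 a u) 0 z) + exp (- a * z) * (0 + g1 a u z) +
          (a * exp (a * z) * (I2 + -1 * RInt (g2 a u) 0 z) + exp (a * z) * (0 + -1 * g2 a u z)))).
  exact H.
  unfold g1, g2. replace (exp (- a * z) * (0 + exp (a * z) * u z)) with (exp (- a * z + a * z) * u z)
    by (rewrite exp_plus; ring).
  replace (exp (a * z) * (0 + -1 * (exp (- a * z) * u z))) with (- (exp (- a * z + a * z) * u z))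
    by (rewrite exp_plus; ring).
  ring.
Qed.

Theorem lemma3p1 (chi b nu mu c : R) (r : R -> R) (rm rp r1 x1 theta1 : R) :
  0 < chi -> 0 < b -> 0 < nu -> 0 < mu ->
  b >= 3 / 2 * chi * mu ->
  holder r ->
  (exists M, forall x, Rabs (r x) <= M) ->
  is_lim r m_infty rm -> is_lim r p_infty rp ->
  rm < 0 -> 0 < rp ->
  (forall x, rm <= r x <= rp) ->
  rm < r1 -> r1 < 0 ->
  (forall x, x <= x1 -> r x <= r1) ->
  0 < theta1 -> theta1 ^ 2 + c * theta1 + r1 = 0 ->
  forall u : R -> R, E1plus rp b chi mu theta1 x1 u ->
    (forall x, A_op chi b nu mu c r u (fun _ => rp / (b - chi * mu)) x <= 0) /\
    (forall x, x < x1 ->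
       A_op chi b nu mu c r u
         (fun y => rp / (b - chi * mu) * exp (theta1 * (y - x1))) x <= 0).
Proof.
  intros Hchi Hb Hnu Hmu Hb32 _ _ _ _ Hrm Hrp Hr Hr1a Hr1b Hr1x Hth Hquad u [[_ Hunif] Hu].
  assert (Hcm : 0 < chi * mu) by (apply Rmult_lt_0_compat; auto).
  assert (Hbcm : 0 < b - chi * mu) by lra.
  set (K := rp / (b - chi * mu)) in *.
  assert (HK : 0 < K) by (apply Rdiv_lt_0_compat; auto).
  assert (HKe : (b - chi * mu) * K = rp) by (unfold K; field; lra).
  pose proof (cont_of_unif u Hunif) as Hucont.
  assert (Hub : forall x, 0 <= u x <= K).
  { intros x. destruct (Hu x) as [H1 H2]. split; auto. unfold U1plus in H2; fold K in H2.
    pose proof (Rmin_l K (K * exp (theta1 * (x - x1)))). lra. }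
  assert (Hue : forall x, u x <= K * exp (theta1 * (x - x1))).
  { intros x. destruct (Hu x) as [H1 H2]. unfold U1plus in H2; fold K in H2.
    pose proof (Rmin_r K (K * exp (theta1 * (x - x1)))). lra. }
  destruct (psi_repr nu mu u K Hnu HK Hucont Hub) as [I1 [I2 [HI1a [HI1b [HI2a HPsi]]]]].
  assert (Ha : 0 < sqrt nu) by (apply sqrt_lt_R0; auto).
  assert (Hnua : nu = sqrt nu * sqrt nu) by (rewrite sqrt_sqrt; lra).
  set (a := sqrt nu) in *.
  assert (Hc1 : forall x, continuous (g1 a u) x) by (intros; apply cont_g1; auto).
  assert (Hc2 : forall x, continuous (g2 a u) x) by (intros; apply cont_g2; auto).
  assert (Hp1 : forall x, 0 <= g1 a u x).
  { intros x. unfold g1. pose proof (exp_pos (a*x)). pose proof (Hub x). nra. }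
  assert (Hp2 : forall x, 0 <= g2 a u x).
  { intros x. unfold g2. pose proof (exp_pos (-a*x)). pose proof (Hub x). nra. }
  assert (HP : forall z, 0 <= I1 + RInt (g1 a u) 0 z).
  { intros z. destruct (Rle_lt_dec 0 z).
    - pose proof (HI1a 0 (Rle_refl 0)). rewrite RInt_point in H. 
      pose proof (RInt_nonneg _ 0 z Hc1 Hp1 r0). change (0 <= I1) in H. lra.
    - pose proof (HI1a z (Rlt_le _ _ r0)). rewrite (RInt_swap' _ 0 z Hc1) in H. lra. }
  assert (HQ : forall z, 0 <= I2 - RInt (g2 a u) 0 z).
  { intros z. destruct (Rle_lt_dec 0 z).
    - pose proof (HI2a z r0). lra.
    - pose proof (HI2a 0 (Rle_refl 0)). rewrite RInt_point in H. change (0 <= I2) in H.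
      pose proof (RInt_nonneg _ z 0 Hc2 Hp2 (Rlt_le _ _ r0)). rewrite (RInt_swap' _ 0 z Hc2) in H0. lra. }
  assert (HD : forall z, Derive (Psi nu mu u) z = mu / (2 * a) * a *
     (exp (a * z) * (I2 - RInt (g2 a u) 0 z) - exp (- a * z) * (I1 + RInt (g1 a u) 0 z))).
  { intros z. rewrite (Derive_ext _ _ z HPsi). apply is_derive_unique.
    replace (- a * z) with (- a * z) by ring. unfold a. apply phi_deriv; auto. }
  assert (HPsi0 : forall z, 0 <= Psi nu mu u z).
  { intros z. rewrite HPsi. fold a. pose proof (HP z). pose proof (HQ z).
    pose proof (exp_pos (- a * z)). pose proof (exp_pos (a * z)).
    apply Rmult_le_pos. apply Rlt_le, Rdiv_lt_0_compat; lra.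
    apply Rplus_le_le_0_compat; apply Rmult_le_pos; lra. }
  split.
  - intros x. unfold A_op. rewrite (Derive_n_const 1), Derive_const.
    pose proof (HPsi0 x). pose proof (Hr x).
    assert (0 <= chi * nu * Psi nu mu u x) by (apply Rmult_le_pos; [apply Rmult_le_pos|]; lra).
    nra.
  - intros x Hx.
    set (U := fun y => K * exp (theta1 * (y - x1))).
    assert (HdU : forall t, Derive U t = theta1 * U t).
    { intros t. apply is_derive_unique. unfold U. auto_derive; auto. unfold Rminus. ring. }
    assert (Hd2 : Derive_n U 2 x = theta1 * theta1 * U x).
    { change (Derive (Derive U) x = theta1 * theta1 * U x).
      rewrite (Derive_ext _ _ x HdU). apply is_derive_unique. unfold U. auto_derive; auto. unfold Rminus. ring. }
    assert (HUx : 0 < U x) by (unfold U; pose proof (exp_pos (theta1 * (x - x1))); nra).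
    set (k := K * exp (- theta1 * x1)).
    set (Bx := k / (a + theta1) * exp ((a + theta1) * x)).
    assert (Hk : 0 < k) by (unfold k; pose proof (exp_pos (- theta1 * x1)); nra).
    assert (HBx : 0 <= Bx).
    { unfold Bx. apply Rmult_le_pos; [apply Rlt_le, Rdiv_lt_0_compat; lra|apply Rlt_le, exp_pos]. }
    assert (Hall : forall t, RInt (g1 a u) t x <= Bx).
    { intros t. destruct (Rle_lt_dec t x).
      - apply Rle_trans with (RInt (fun y => k * exp ((a + theta1) * y)) t x).
        + apply RInt_le; auto. apply exR; auto. apply exR; intros; apply cont_exp_lin.
          intros y _. unfold g1. pose proof (Hue y). pose proof (exp_pos (a * y)).
          replace (k * exp ((a + theta1) * y)) with (exp (a * y) * (K * exp (theta1 * (y - x1)))).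
          nra. unfold k. replace ((a + theta1) * y) with (a * y + theta1 * y) by ring.
          replace (theta1 * (y - x1)) with (theta1 * y + - theta1 * x1) by ring.
          rewrite !exp_plus. ring.
        + rewrite RInt_exp_lin by lra. unfold Bx.
          pose proof (exp_pos ((a + theta1) * t)).
          assert (0 < k / (a + theta1)) by (apply Rdiv_lt_0_compat; lra). nra.
      - rewrite (RInt_swap' _ x t Hc1). pose proof (RInt_nonneg _ x t Hc1 Hp1 (Rlt_le _ _ r0)). lra. }
    assert (HPb : I1 + RInt (g1 a u) 0 x <= Bx).
    { assert (I1 <= Bx - RInt (g1 a u) 0 x); [|lra].
      apply HI1b. intros t Ht. pose proof (Hall t). rewrite <- (Chas _ t 0 x Hc1) in H. lra. }
    set (S := exp (- a * x) * (I1 + RInt (g1 a u) 0 x)).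
    set (T := exp (a * x) * (I2 - RInt (g2 a u) 0 x)).
    assert (HS0 : 0 <= S) by (unfold S; apply Rmult_le_pos; [apply Rlt_le, exp_pos|apply HP]).
    assert (HT0 : 0 <= T) by (unfold T; apply Rmult_le_pos; [apply Rlt_le, exp_pos|apply HQ]).
    assert (HSb : (a + theta1) * S <= U x).
    { unfold S. pose proof (exp_pos (- a * x)).
      apply Rle_trans with ((a + theta1) * (exp (- a * x) * Bx)).
      - apply Rmult_le_compat_l; [lra|]. apply Rmult_le_compat_l; lra.
      - unfold Bx, U, k. right. field_simplify; [|lra].
        replace (theta1 * (x - x1)) with (- a * x + (- theta1 * x1 + (a + theta1) * x)) by ring.
        rewrite !exp_plus. field; lra. }
    assert (HPsix : Psi nu mu u x = mu / (2 * a) * (S + T)) by (rewrite HPsi; reflexivity).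
    assert (HDx : Derive (Psi nu mu u) x = mu / 2 * (T - S)).
    { rewrite HD. fold S T. field. lra. }
    unfold A_op. fold U. rewrite Hd2, HdU, HDx, HPsix.
    assert (Hrx : r x <= r1) by (apply Hr1x; lra).
    assert (HnP : chi * nu * (mu / (2 * a) * (S + T)) = chi * (mu / 2) * a * (S + T)).
    { rewrite Hnua. field. lra. }
    rewrite HnP.
    assert (Hbr : theta1 * theta1 + (c - chi * (mu / 2 * (T - S))) * theta1
       + (r x - chi * (mu / 2) * a * (S + T) - (b - chi * mu) * U x) <= 0).
    { assert (E : theta1 * theta1 + c * theta1 = - r1) by (simpl in Hquad; lra).
      assert (HtS : theta1 * S <= U x) by nra.
      assert (0 <= chi * (mu/2) * theta1 * T) by (apply Rmult_le_pos; [|lra]; apply Rmult_le_pos; lra).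
      assert (0 <= chi * (mu/2) * a * (S + T)) by (apply Rmult_le_pos; [|lra]; apply Rmult_le_pos; lra).
      assert (chi * (mu/2) * theta1 * S <= chi * (mu/2) * U x).
      { replace (chi * (mu/2) * theta1 * S) with (chi * (mu/2) * (theta1 * S)) by ring.
        apply Rmult_le_compat_l; lra. }
      nra. }
    nra.
Qed.
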